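(* Let $a,b\in\mathbb{R}$ with $b\neq0$, $T>0$, $h\in(0,1)$, and let $m_\Lambda[n]=\exp\!\big(\jmath\,\frac{a}{2b}(nTh)^2\big)$ for $n\in\mathbb{Z}$. Let $u=(u[n])_{n\in\mathbb{Z}}$ be the state sequence of the first-order $\Lambda\Sigma\Delta$ scheme $$u[n]=g[n]-q_{\Lambda}[n]+e^{-\jmath\frac{a(2n-1)(Th)^2}{2b}}u[n-1],\qquad q_{\Lambda}[n]=\operatorname{csgn}\!\Big(e^{-\jmath\frac{a(2n-1)(Th)^2}{2b}}u[n-1]+g[n]\Big),$$ driven by samples $g[n]=g(nTh)$ of a signal $g$ bandlimited to $[-\Omega,\Omega]$ in the LCT domain with $|g|\le1$, where the states satisfy $|\operatorname{Re}(u[n])|<1$ and $|\operatorname{Im}(u[n])|<1$ for all $n\in\mathbb{Z}$. Let $\varphi:\mathbb{R}\to\mathbb{C}$ be continuously differentiable with $\varphi'\in L^1(\mathbb{R})$ and $\sum_{n\in\mathbb{Z}}|\varphi(x-nh)|<\infty$ for every $x\in\mathbb{R}$. Define $\tilde u[n]=m_\Lambda[n]u[n]$, $v[n]=\delta[n]-\delta[n-1]$, and $$e(t)=h\,e^{-\jmath\frac{a t^2}{2b}}\sum_{n\in\mathbb{Z}}(\tilde u* v)[n]\,\varphi\!\Big(\frac{t}{T}-nh\Big),\qquad t\in\mathbb{R}.$$ Then for all $t\in\mathbb{R}$, $$|e(t)|\le h\sqrt{2}\,\|\varphi'\|_{L^1}.$$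
   Context: $\jmath$ is the imaginary unit; $*$ denotes discrete convolution, so $(\tilde u*v)[n]=\tilde u[n]-\tilde u[n-1]$; $\delta$ is the Kronecker delta. $\operatorname{csgn}(z)=\operatorname{sgn}(\operatorname{Re}z)+\jmath\operatorname{sgn}(\operatorname{Im}z)$ with $\operatorname{sgn}$ taking values $\pm1$. $e(t)$ is the approximation error $g(t)-\tilde g(t)$ of the reconstruction $\tilde g(t)=h\,e^{-\jmath\frac{at^2}{2b}}\sum_n m_\Lambda[n]q_\Lambda[n]\varphi(\frac tT-nh)$ with low-pass kernel $\varphi$ of bandwidth $\Omega$, and $T=\pi b/\Omega$. The Linear Canonical Transform has parameter matrix $\Lambda=\begin{bmatrix}a&b\\c&d\end{bmatrix}$, $ad-bc=1$. *)

(* Defs.v *)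
From Stdlib Require Import Reals ZArith.
From Coquelicot Require Import Coquelicot.
Open Scope R_scope.

Definition cis (theta : R) : C := (cos theta, sin theta).

Definition sgnpm (x : R) : R := if Rle_dec 0 x then 1 else -1.

Definition csgn (z : C) : C := (sgnpm (Re z), sgnpm (Im z)).

Definition zsummable (f : Z -> R) : Prop :=
  ex_series (fun n : nat => f (Z.of_nat n)) /\
  ex_series (fun n : nat => f (- Z.of_nat n - 1)%Z).

Definition zsumR (f : Z -> R) : R :=
  Series (fun n : nat => f (Z.of_nat n)) + Series (fun n : nat => f (- Z.of_nat n - 1)%Z).

Definition zsumC (f : Z -> C) : C :=
  (zsumR (fun n => Re (f n)), zsumR (fun n => Im (f n))).

Definition mLam (a b T h : R) (n : Z) : C := cis (a / (2 * b) * (IZR n * T * h) ^ 2).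

(* discrete convolution with v = delta - delta[. - 1] *)
Definition conv_v (x : Z -> C) (n : Z) : C := Cminus (x n) (x (n - 1)%Z).

(* Bandlimitedness to [-Om, Om] in the LCT domain with parameters (a,b,c,d), b <> 0:
   G(w) = K0 * e^{j d w^2/(2b)} * int g(t) e^{j(a t^2/(2b) - t w / b)} dt, and the
   prefactor is nonzero, so G(w) = 0 iff the integral (improper, exists) is 0. *)
Definition LCT_bandlimited (a b Om : R) (g : R -> C) : Prop :=
  forall w : R, Om < Rabs w ->
    is_RInt_gen (V := C_R_NormedModule)
      (fun t => Cmult (g t) (cis (a * t ^ 2 / (2 * b) - t * w / b)))
      (Rbar_locally m_infty) (Rbar_locally p_infty) (RtoC 0).

Definition err (a b T h : R) (u : Z -> C) (phi : R -> C) (t : R) : C :=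
  Cmult (Cmult (RtoC h) (cis (- (a * t ^ 2) / (2 * b))))
    (zsumC (fun n => Cmult (conv_v (fun k => Cmult (mLam a b T h k) (u k)) n)
                           (phi (t / T - IZR n * h)))).

(* Main.v *)
Require Import Defs.
From Stdlib Require Import Reals ZArith Lra Lia.
From Coquelicot Require Import Coquelicot.
Open Scope R_scope.

Lemma normC z : norm (K:=R_AbsRing) (V:=C_R_NormedModule) z = Cmod z.
Proof. destruct z as [p q]. unfold norm; simpl. unfold prod_norm, Cmod; simpl. unfold norm; simpl. unfold abs; simpl.
 rewrite !Rmult_1_r, <- !Rsqr_def, <- !Rsqr_abs. reflexivity. Qed.

Lemma cont_Cmod (dphi : R -> C) (Hc : forall x, continuous dphi x) :
  forall x, continuous (fun x => Cmod (dphi x)) x.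
Proof.
  intro x. apply continuous_ext with (fun x => norm (K:=R_AbsRing) (V:=C_R_NormedModule) (dphi x)).
  intros; apply normC. apply (continuous_comp dphi (norm (K:=R_AbsRing) (V:=C_R_NormedModule))).
  apply Hc. exact (filterlim_norm (K:=R_AbsRing) (V:=C_R_NormedModule) (dphi x)).
Qed.

Lemma incr (phi dphi : R -> C)
  (Hd : forall x : R, is_derive (K := R_AbsRing) (V := C_R_NormedModule) phi x (dphi x))
  (Hc : forall x, continuous dphi x) z y : z <= y ->
  Cmod (Cminus (phi y) (phi z)) <= RInt (fun x => Cmod (dphi x)) z y.
Proof.
  intro Hzy.
  pose proof (is_RInt_derive (V:=C_R_CompleteNormedModule) phi dphi z y (fun x _ => Hd x) (fun x _ => Hc x)) as H1.
  assert (H2 : ex_RInt (fun x => Cmod (dphi x)) z y).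
  { apply (ex_RInt_continuous (V:=R_CompleteNormedModule)). intros; apply cont_Cmod; auto. }
  rewrite <- normC.
  apply (norm_RInt_le dphi (fun x => Cmod (dphi x)) z y _ _ Hzy).
  - intros; rewrite normC; lra.
  - exact H1.
  - exact (RInt_correct (V:=R_CompleteNormedModule) _ _ _ H2).
Qed.

Lemma RInt_gen_ge (g : R -> R) (Hc : forall x, continuous g x) (Hpos : forall x, 0 <= g x)
  (Hex : ex_RInt_gen g (Rbar_locally m_infty) (Rbar_locally p_infty)) p q : p <= q ->
  RInt g p q <= RInt_gen g (Rbar_locally m_infty) (Rbar_locally p_infty).
Proof.
  intro Hpq.
  assert (Hexg : forall a b, ex_RInt g a b).
  { intros; apply (ex_RInt_continuous (V:=R_CompleteNormedModule)); intros; apply Hc. }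
  pose proof (RInt_gen_correct (V:=R_CompleteNormedModule) g Hex) as H.
  set (l := RInt_gen g (Rbar_locally m_infty) (Rbar_locally p_infty)) in *.
  apply Rnot_lt_le; intro Hlt.
  assert (Heps : 0 < RInt g p q - l) by lra.
  unfold is_RInt_gen, filterlimi, filter_le, filtermapi in H.
  specialize (H _ (locally_ball l (mkposreal _ Heps))).
  destruct H as [Q R0 HQ HR HP].
  destruct HQ as [M HM]. destruct HR as [M' HM'].
  set (a := Rmin M p - 1). set (b := Rmax M' q + 1).
  destruct (HP a b) as [y [Hy Hb]].
  { apply HM. unfold a. pose proof (Rmin_l M p). lra. }
  { apply HM'. unfold b. pose proof (Rmax_l M' q). lra. }
  simpl in Hy. apply is_RInt_unique in Hy.
  assert (Hap : a <= p) by (unfold a; pose proof (Rmin_r M p); lra).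
  assert (Hqb : q <= b) by (unfold b; pose proof (Rmax_r M' q); lra).
  pose proof (RInt_Chasles g a p q (Hexg _ _) (Hexg _ _)) as C1.
  pose proof (RInt_Chasles g a q b (Hexg _ _) (Hexg _ _)) as C2.
  pose proof (RInt_ge_0 g a p Hap (Hexg _ _) (fun x _ => Hpos x)) as P1.
  pose proof (RInt_ge_0 g q b Hqb (Hexg _ _) (fun x _ => Hpos x)) as P2.
  change plus with Rplus in C1, C2.
  unfold ball in Hb; simpl in Hb; unfold AbsRing_ball, abs, minus, plus, opp in Hb; simpl in Hb.
  rewrite <- Hy in Hb. apply Rabs_def2 in Hb. lra.
Qed.

Lemma Cmod_cis th : Cmod (cis th) = 1.
Proof. unfold Cmod, cis; simpl. rewrite !Rmult_1_r.
  rewrite (Rplus_comm (cos th * cos th)). rewrite <- !Rsqr_def, sin2_cos2. apply sqrt_1. Qed.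

Lemma sumS (a : nat -> R) N : sum_n a (S N) = sum_n a N + a (S N).
Proof. exact (sum_Sn (G:=R_AbelianMonoid) a N). Qed.

Theorem mainTheorem2
  (a b c d T h Om : R) (g : R -> C) (u q : Z -> C) (phi dphi : R -> C)
  (Hdet : a * d - b * c = 1)
  (Hb : b <> 0) (HT : 0 < T) (Hh : 0 < h < 1) (HOm : 0 < Om)
  (HTdef : T = PI * b / Om)
  (Hband : LCT_bandlimited a b Om g)
  (Hg1 : forall t, Cmod (g t) <= 1)
  (Hq : forall n : Z,
      q n = csgn (Cplus (Cmult (cis (- (a * (2 * IZR n - 1) * (T * h) ^ 2) / (2 * b))) (u (n - 1)%Z))
                        (g (IZR n * T * h))))
  (Hu : forall n : Z,
      u n = Cplus (Cminus (g (IZR n * T * h)) (q n))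
                  (Cmult (cis (- (a * (2 * IZR n - 1) * (T * h) ^ 2) / (2 * b))) (u (n - 1)%Z)))
  (Hustable : forall n : Z, Rabs (Re (u n)) < 1 /\ Rabs (Im (u n)) < 1)
  (Hderiv : forall x : R, is_derive (K := R_AbsRing) (V := C_R_NormedModule) phi x (dphi x))
  (Hcont : forall x : R, continuous dphi x)
  (HL1 : ex_RInt_gen (fun x => Cmod (dphi x)) (Rbar_locally m_infty) (Rbar_locally p_infty))
  (Hsum : forall x : R, zsummable (fun n => Cmod (phi (x - IZR n * h)))) :
  forall t : R,
    Cmod (err a b T h u phi t)
      <= h * sqrt 2 * RInt_gen (fun x => Cmod (dphi x)) (Rbar_locally m_infty) (Rbar_locally p_infty).
Proof.
  intro t.
  set (I := RInt_gen (fun x => Cmod (dphi x)) (Rbar_locally m_infty) (Rbar_locally p_infty)).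
  set (gabs := fun x => Cmod (dphi x)).
  set (x := t / T).
  set (U := fun k => Cmult (mLam a b T h k) (u k)).
  set (ph := fun k : Z => phi (x - IZR k * h)).
  set (f := fun n => Cmult (conv_v U n) (ph n)).
  assert (Hcg : forall y, continuous gabs y) by (apply cont_Cmod; exact Hcont).
  assert (Hexg : forall p q, ex_RInt gabs p q).
  { intros; apply (ex_RInt_continuous (V:=R_CompleteNormedModule)); intros; apply Hcg. }
  assert (HI : forall p q, p <= q -> RInt gabs p q <= I).
  { intros; apply RInt_gen_ge; auto. intros; apply Cmod_ge_0. }
  assert (HI0 : 0 <= I).
  { pose proof (HI x x (Rle_refl _)) as H0. rewrite RInt_point in H0. exact H0. }
  assert (HU : forall k, Cmod (U k) <= sqrt 2).
  { intro k. unfold U, mLam. rewrite Cmod_mult, Cmod_cis, Rmult_1_l.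
    eapply Rle_trans. apply Cmod_2Rmax. destruct (Hustable k) as [H1 H2].
    unfold Re, Im in H1, H2. pose proof (sqrt_pos 2).
    rewrite <- (Rmult_1_r (sqrt 2)) at 2. apply Rmult_le_compat_l. lra.
    apply Rmax_lub; lra. }
  assert (Hstep : forall k lo hi, lo = x - (IZR k + 1) * h -> hi = x - IZR k * h ->
    Cmod (Cmult (U k) (Cminus (ph k) (ph (k + 1)%Z))) <= sqrt 2 * RInt gabs lo hi).
  { intros k lo hi Hlo Hhi. rewrite Cmod_mult. apply Rmult_le_compat. apply Cmod_ge_0. apply Cmod_ge_0.
    apply HU. unfold ph. rewrite plus_IZR. rewrite <- Hlo.
    replace (x - IZR k * h) with hi by lra. apply incr; auto. lra. }
  set (Fp := fun n:nat => f (Z.of_nat n)). set (Fn := fun n:nat => f (- Z.of_nat n - 1)%Z).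
  set (SS := fun N => (sum_n (fun n => Re (Fp n)) N + sum_n (fun n => Re (Fn n)) N,
                      sum_n (fun n => Im (Fp n)) N + sum_n (fun n => Im (Fn n)) N) : C).
  set (E := fun N:nat => Cplus (Cminus (SS N) (Cmult (U (Z.of_nat N)) (ph (Z.of_nat N))))
                               (Cmult (U (-Z.of_nat N - 2)%Z) (ph (-Z.of_nat N - 1)%Z))).
  set (J := fun N:nat => RInt gabs (x - INR N * h) (x + (INR N + 1) * h)).
  assert (Hclaim : forall N, Cmod (E N) <= sqrt 2 * J N).
  { induction N.
    - assert (HE : E 0%nat = Cmult (U (-1)%Z) (Cminus (ph (-1)%Z) (ph (-1+1)%Z))).
      { unfold E, SS, Fp, Fn, f, conv_v. rewrite !sum_O.
        replace (-Z.of_nat 0 - 1)%Z with (-1)%Z by reflexivity.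
        replace (-Z.of_nat 0 - 2)%Z with (-2)%Z by reflexivity.
        replace (Z.of_nat 0) with 0%Z by reflexivity.
        replace (-1 - 1)%Z with (-2)%Z by reflexivity.
        replace (0 - 1)%Z with (-1)%Z by reflexivity.
        replace (-1 + 1)%Z with 0%Z by reflexivity.
        apply injective_projections; simpl; ring. }
      rewrite HE. apply Hstep; simpl; ring.
    - assert (HE : E (S N) = Cplus (Cplus (E N) (Cmult (U (Z.of_nat N)) (Cminus (ph (Z.of_nat N)) (ph (Z.of_nat N + 1)%Z))))
          (Cmult (U (-Z.of_nat N - 2)%Z) (Cminus (ph (-Z.of_nat N - 2)%Z) (ph (-Z.of_nat N - 2 + 1)%Z)))).
      { unfold E, SS, Fp, Fn, f, conv_v. rewrite !sumS.
        rewrite Nat2Z.inj_succ. set (n := Z.of_nat N).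
        replace (Z.succ n - 1)%Z with n by lia. replace (- Z.succ n - 1)%Z with (-n-2)%Z by lia.
        replace (-n-2-1)%Z with (-n-3)%Z by lia. replace (- Z.succ n - 2)%Z with (-n-3)%Z by lia.
        replace (Z.succ n) with (n+1)%Z by lia. replace (-n-2+1)%Z with (-n-1)%Z by lia.
        apply injective_projections; simpl; ring. }
      rewrite HE. eapply Rle_trans; [apply Cmod_triangle|].
      eapply Rle_trans; [apply Rplus_le_compat; [eapply Rle_trans; [apply Cmod_triangle| apply Rplus_le_compat; [apply IHN | apply (Hstep _ (x - (INR N + 1)*h) (x - INR N * h))]] | apply (Hstep _ (x + (INR N + 1)*h) (x + (INR N + 1 + 1)*h))] |].
      all: try (rewrite ?minus_IZR, ?opp_IZR, <- ?INR_IZR_INZ; ring).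
      unfold J. rewrite S_INR.
      rewrite <- (RInt_Chasles gabs (x - (INR N+1)*h) (x - INR N*h) (x + (INR N + 1 + 1)*h)) by apply Hexg.
      rewrite <- (RInt_Chasles gabs (x - INR N*h) (x + (INR N + 1)*h) (x + (INR N + 1 + 1)*h)) by apply Hexg.
      unfold plus; simpl. lra. }
  destruct (Hsum x) as [Hsp Hsn].
  assert (Hfb : forall k, Cmod (f k) <= 2 * sqrt 2 * Cmod (ph k)).
  { intro k. unfold f, conv_v. rewrite Cmod_mult. apply Rmult_le_compat_r. apply Cmod_ge_0.
    unfold Cminus. eapply Rle_trans; [apply Cmod_triangle|]. rewrite Cmod_opp.
    pose proof (HU k). pose proof (HU (k-1)%Z). lra. }
  assert (Hre : forall z, Rabs (Re z) <= Cmod z).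
  { intro z. eapply Rle_trans; [|apply Rmax_Cmod]. apply Rmax_l. }
  assert (Him : forall z, Rabs (Im z) <= Cmod z).
  { intro z. eapply Rle_trans; [|apply Rmax_Cmod]. apply Rmax_r. }
  assert (Hsp2 : ex_series (fun n => 2 * sqrt 2 * Cmod (ph (Z.of_nat n)))).
  { exact (ex_series_scal_l (K:=R_AbsRing) (V:=R_NormedModule) (2 * sqrt 2) _ Hsp). }
  assert (Hsn2 : ex_series (fun n => 2 * sqrt 2 * Cmod (ph (- Z.of_nat n - 1)%Z))).
  { exact (ex_series_scal_l (K:=R_AbsRing) (V:=R_NormedModule) (2 * sqrt 2) _ Hsn). }
  assert (eRp : ex_series (fun n => Re (Fp n))).
  { apply (ex_series_le (K:=R_AbsRing) (V:=R_CompleteNormedModule) _ _ (fun n => Rle_trans _ _ _ (Hre _) (Hfb _)) Hsp2). }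
  assert (eRn : ex_series (fun n => Re (Fn n))).
  { apply (ex_series_le (K:=R_AbsRing) (V:=R_CompleteNormedModule) _ _ (fun n => Rle_trans _ _ _ (Hre _) (Hfb _)) Hsn2). }
  assert (eIp : ex_series (fun n => Im (Fp n))).
  { apply (ex_series_le (K:=R_AbsRing) (V:=R_CompleteNormedModule) _ _ (fun n => Rle_trans _ _ _ (Him _) (Hfb _)) Hsp2). }
  assert (eIn : ex_series (fun n => Im (Fn n))).
  { apply (ex_series_le (K:=R_AbsRing) (V:=R_CompleteNormedModule) _ _ (fun n => Rle_trans _ _ _ (Him _) (Hfb _)) Hsn2). }
  set (P := zsumR (fun n => Re (f n))). set (Q := zsumR (fun n => Im (f n))).
  assert (LR : is_lim_seq (fun N => fst (SS N)) P).
  { exact (is_lim_seq_plus' _ _ _ _ (Series_correct _ eRp) (Series_correct _ eRn)). }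
  assert (LI : is_lim_seq (fun N => snd (SS N)) Q).
  { exact (is_lim_seq_plus' _ _ _ _ (Series_correct _ eIp) (Series_correct _ eIn)). }
  set (B := fun N:nat => sqrt 2 * I + sqrt 2 * (Cmod (ph (Z.of_nat N)) + Cmod (ph (- Z.of_nat N - 1)%Z))).
  assert (LB : is_lim_seq B (sqrt 2 * I + sqrt 2 * (0 + 0))).
  { apply is_lim_seq_plus'. apply is_lim_seq_const. apply is_lim_seq_mult'. apply is_lim_seq_const.
    apply is_lim_seq_plus'. exact (ex_series_lim_0 _ Hsp). exact (ex_series_lim_0 _ Hsn). }
  assert (HB : forall N, Cmod (SS N) <= B N).
  { intro N. assert (HS : SS N = Cplus (Cminus (E N) (Cmult (U (- Z.of_nat N - 2)%Z) (ph (- Z.of_nat N - 1)%Z)))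
                                    (Cmult (U (Z.of_nat N)) (ph (Z.of_nat N)))).
    { unfold E. apply injective_projections; simpl; ring. }
    rewrite HS. unfold Cminus. eapply Rle_trans; [apply Cmod_triangle|].
    eapply Rle_trans; [apply Rplus_le_compat_r; apply Cmod_triangle|].
    rewrite Cmod_opp, !Cmod_mult.
    pose proof (Hclaim N).
    assert (J N <= I). { unfold J. apply HI. pose proof (pos_INR N). nra. }
    pose proof (HU (Z.of_nat N)). pose proof (HU (- Z.of_nat N - 2)%Z).
    pose proof (Cmod_ge_0 (ph (Z.of_nat N))). pose proof (Cmod_ge_0 (ph (- Z.of_nat N - 1)%Z)).
    pose proof (sqrt_pos 2).
    unfold B. nra. }
  assert (Hpt : forall N, fst (SS N) * fst (SS N) + snd (SS N) * snd (SS N) <= B N * B N).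
  { intro N.
    assert (Hc : fst (SS N) * fst (SS N) + snd (SS N) * snd (SS N) = Cmod (SS N) * Cmod (SS N)).
    { unfold Cmod. rewrite sqrt_sqrt. simpl; ring. pose proof (pow2_ge_0 (fst (SS N))). pose proof (pow2_ge_0 (snd (SS N))). lra. }
    rewrite Hc. apply Rmult_le_compat; try apply Cmod_ge_0; apply HB. }
  pose proof (is_lim_seq_le (fun N => fst (SS N) * fst (SS N) + snd (SS N) * snd (SS N)) (fun N => B N * B N) _ _
     Hpt (is_lim_seq_plus' _ _ _ _ (is_lim_seq_mult' _ _ _ _ LR LR) (is_lim_seq_mult' _ _ _ _ LI LI))
     (is_lim_seq_mult' _ _ _ _ LB LB)) as Hle.
  simpl in Hle.
  replace (sqrt 2 * I + sqrt 2 * (0 + 0)) with (sqrt 2 * I) in Hle by ring.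
  assert (HZ : Cmod (zsumC f) <= sqrt 2 * I).
  { change (zsumC f) with (P, Q). unfold Cmod. cbn [fst snd].
    pose proof (sqrt_pos 2).
    rewrite <- (sqrt_square (sqrt 2 * I)) by nra. apply sqrt_le_1_alt.
    replace (P ^ 2 + Q ^ 2) with (P * P + Q * Q) by ring. exact Hle. }
  change (Cmod (Cmult (Cmult (RtoC h) (cis (- (a * t ^ 2) / (2 * b)))) (zsumC f)) <= h * sqrt 2 * I).
  rewrite !Cmod_mult, Cmod_cis, Cmod_R, Rabs_pos_eq by lra.
  rewrite Rmult_1_r, Rmult_assoc. apply Rmult_le_compat_l. lra. exact HZ.
Qed.
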